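(* For all $n\ge1$, $\mathbf{cf}_{n,1}(p,q)|_{p^0}=q^{\binom{n}{2}}$. Moreover, $$\mathbf{cf}_{n,1}(p,q)|_{p^1}=\begin{cases}0 & n=1,2,3,\\ \binom{n-2}{2}q^{\binom{n}{2}-2} & n\ge4,\end{cases}$$ $$\mathbf{cf}_{n,1}(p,q)|_{p^2}=\begin{cases}0 & n=1,2,3,4,\\ \left(3\binom{n-1}{4}-\binom{n-3}{2}\right)q^{\binom{n}{2}-4} & n\ge5,\end{cases}$$ $$\mathbf{cf}_{n,1}(p,q)|_{p^3}=\begin{cases}0 & n=1,2,3,4,5,\\ \left(15\binom{n}{6}-6\binom{n-2}{4}+\binom{n-4}{4}\right)q^{\binom{n}{2}-6} & n\ge5.\end{cases}$$
   Context: $F_1(p,q)=q$, $F_2(p,q)=q^2$ and $F_m(p,q)=qF_{m-1}(p,q)+pF_{m-2}(p,q)$ for $m\ge3$. Let $(x)_{\uparrow_{F,p,q,0}}=1$ and $(x)_{\uparrow_{F,p,q,k}}=x(x+F_1(p,q))\cdots(x+F_{k-1}(p,q))$ for $k\ge1$. Define the polynomials $\mathbf{cf}_{n,k}(p,q)$ for $0\le k\le n$ by $(x)_{\uparrow_{F,p,q,n}}=\sum_{k=0}^n\mathbf{cf}_{n,k}(p,q)x^k$. For a polynomial $f$ in $p$ with coefficients in $\mathbb{Q}[q]$, $f|_{p^s}$ denotes the coefficient of $p^s$. *)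

(* Defs.v *)
From mathcomp Require Import all_boot all_order all_algebra.
Set Implicit Arguments. Unset Strict Implicit. Unset Printing Implicit Defensive.
Import Order.TTheory GRing.Theory Num.Theory.
Local Open Scope ring_scope.

(* Polynomials in p with coefficients in Q[q]:  PQ := (Q[q])[p]. *)
Notation PQ := {poly {poly rat}}.

Definition pvar : PQ := 'X.
Definition qvar : PQ := ('X : {poly rat})%:P.

(* F_m(p,q); F 0 is an unused default (set to 0). *)
Fixpoint Fpq (m : nat) : PQ :=
  match m with
  | 0 => 0
  | 1 => qvar
  | 2 => qvar ^+ 2
  | (m'.+1 as m1).+1 => qvar * Fpq m1 + pvar * Fpq m'
  end.

(* (x)_{uparrow F,p,q,k} as a polynomial in x with coefficients in Q[q][p] *)
Definition risingF (k : nat) : {poly PQ} :=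
  if k is 0 then 1
  else 'X * \prod_(1 <= i < k) ('X + (Fpq i)%:P).

Definition cf (n k : nat) : PQ := (risingF n)`_k.

(* Main.v *)
Require Import Defs.
From mathcomp Require Import all_boot all_order all_algebra.
From mathcomp Require Import ring lra zify.
Import GRing.Theory Num.Theory.
Local Open Scope ring_scope.

Lemma ffactR (a k : nat) : ((a ^_ k)%:R : rat) = \prod_(i < k) (a%:R - i%:R).
Proof.
elim: k => [|k IH]; first by rewrite big_ord0.
rewrite big_ord_recr /= -IH ffactnSr natrM.
case: (leqP k a) => h.
- by rewrite (natrB _ h).
- by rewrite ffact_small // !mul0r.
Qed.

Lemma binR (a k : nat) : (('C(a, k))%:R : rat) = (\prod_(i < k) (a%:R - i%:R)) / (k`!)%:R.
Proof.
rewrite -ffactR -bin_ffact natrM mulfK //.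
by rewrite pnatr_eq0 -lt0n fact_gt0.
Qed.

Lemma bin1R a : (('C(a, 1))%:R : rat) = a%:R.
Proof. by rewrite bin1. Qed.
Lemma bin2R a : (('C(a, 2))%:R : rat) = a%:R * (a%:R - 1) / 2.
Proof. rewrite binR !big_ord_recr big_ord0 /= !factS fact0 /=; by field. Qed.
Lemma bin3R a : (('C(a, 3))%:R : rat) = a%:R * (a%:R - 1) * (a%:R - 2) / 6.
Proof. rewrite binR !big_ord_recr big_ord0 /= !factS fact0 /=; by field. Qed.
Lemma bin4R a : (('C(a, 4))%:R : rat) = a%:R * (a%:R - 1) * (a%:R - 2) * (a%:R - 3) / 24.
Proof. rewrite binR !big_ord_recr big_ord0 /= !factS fact0 /=; by field. Qed.
Lemma bin6R a : (('C(a, 6))%:R : rat) = a%:R * (a%:R - 1) * (a%:R - 2) * (a%:R - 3) * (a%:R - 4) * (a%:R - 5) / 720.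
Proof. rewrite binR !big_ord_recr big_ord0 /= !factS fact0 /=; by field. Qed.

Definition c1 n : rat := ('C(n - 2, 2))%:R.
Definition c2 n : rat := (3 * 'C(n - 1, 4))%:R - ('C(n - 3, 2))%:R.
Definition c3 n : rat := (15 * 'C(n, 6))%:R - (6 * 'C(n - 2, 4))%:R + ('C(n - 4, 4))%:R.
Definition d k n : rat := ('C(n.-1 - k, k))%:R.



Lemma subAdd m a b : (b <= a)%N -> (m + a - b = m + (a - b))%N.
Proof. move=> h; by rewrite addnBA. Qed.
Lemma predAdd m a : ((m + a.+1).-1 = m + a)%N.
Proof. by rewrite addnS. Qed.


Lemma id1 n : (1 <= n)%N -> c1 n.+1 = c1 n + d 1 n.
Proof.
move=> hn; case: (leqP 10 n) => h.
- have [m ->] : exists m, n = (m + 10)%N by exists (n - 10)%N; rewrite subnK.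
  rewrite /c1 /c2 /c3 /d ?natrM -?addnS ?predAdd ?subAdd // ?subSS ?subn0
      ?bin1R ?bin2R ?bin3R ?bin4R ?bin6R ?natrD; by field.
- case: n hn h => [|[|[|[|[|[|[|[|[|[|n]]]]]]]]]] hn h; try (exfalso; move: hn h; rewrite ltnn ?ltnS ?ltn0 // ).
  all: rewrite /c1 /c2 /c3 /d ?natrM /= ?subSS ?subn0 ?sub0n
      ?bin1R ?bin2R ?bin3R ?bin4R ?bin6R; by field.
Qed.
Lemma id2 n : (1 <= n)%N -> c2 n.+1 = c2 n + c1 n * d 1 n + d 2 n.
Proof.
move=> hn; case: (leqP 10 n) => h.
- have [m ->] : exists m, n = (m + 10)%N by exists (n - 10)%N; rewrite subnK.
  rewrite /c1 /c2 /c3 /d ?natrM -?addnS ?predAdd ?subAdd // ?subSS ?subn0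
      ?bin1R ?bin2R ?bin3R ?bin4R ?bin6R ?natrD; by field.
- case: n hn h => [|[|[|[|[|[|[|[|[|[|n]]]]]]]]]] hn h; try (exfalso; move: hn h; rewrite ltnn ?ltnS ?ltn0 // ).
  all: rewrite /c1 /c2 /c3 /d ?natrM /= ?subSS ?subn0 ?sub0n
      ?bin1R ?bin2R ?bin3R ?bin4R ?bin6R; by field.
Qed.
Lemma id3 n : (1 <= n)%N -> c3 n.+1 = c3 n + c2 n * d 1 n + c1 n * d 2 n + d 3 n.
Proof.
move=> hn; case: (leqP 10 n) => h.
- have [m ->] : exists m, n = (m + 10)%N by exists (n - 10)%N; rewrite subnK.
  rewrite /c1 /c2 /c3 /d ?natrM -?addnS ?predAdd ?subAdd // ?subSS ?subn0
      ?bin1R ?bin2R ?bin3R ?bin4R ?bin6R ?natrD; by field.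
- case: n hn h => [|[|[|[|[|[|[|[|[|[|n]]]]]]]]]] hn h; try (exfalso; move: hn h; rewrite ltnn ?ltnS ?ltn0 // ).
  all: rewrite /c1 /c2 /c3 /d ?natrM /= ?subSS ?subn0 ?sub0n
      ?bin1R ?bin2R ?bin3R ?bin4R ?bin6R; by field.
Qed.

Lemma coefF_all m : forall k, 'X ^+ (k + k) * (Fpq m.+1)`_k = d k m.+1 *: 'X ^+ m.+1
                    /\ 'X ^+ (k + k) * (Fpq m.+2)`_k = d k m.+2 *: 'X ^+ m.+2.
Proof.
elim: m => [|m IH] k.
- split.
  + rewrite /= /qvar coefC /d /=; case: k => [|k] /=.
    * by rewrite bin0 scale1r mul1r.
    * by rewrite ?subSS ?sub0n ?subn0 bin0n /= scale0r mulr0.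
  + rewrite /= /qvar expr2 coefCM coefC /d /=; case: k => [|k] /=.
    * by rewrite bin0 scale1r mul1r.
    * by rewrite ?subSS ?sub0n ?subn0 bin0n /= scale0r !mulr0.
- split; first exact: (proj2 (IH k)).
  have -> : Fpq m.+3 = qvar * Fpq m.+2 + pvar * Fpq m.+1 by [].
  rewrite coefD /qvar coefCM /pvar coefXM.
  case: k => [|k].
  + have := proj2 (IH 0%N); rewrite /d /= !bin0 !scale1r !mul1r => ->.
    by rewrite addr0 exprS.
  + have e1 := proj2 (IH k.+1); have e2 := proj1 (IH k).
    have -> : 'X ^+ (k.+1 + k.+1) * ('X * (Fpq m.+2)`_k.+1 + (Fpq m.+1)`_k)
       = 'X * ('X ^+ (k.+1 + k.+1) * (Fpq m.+2)`_k.+1) + 'X ^+ 2 * ('X ^+ (k + k) * (Fpq m.+1)`_k).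
      by rewrite addSn addnS !exprS; ring.
    rewrite e1 e2 /d /=.
    have -> : ('C(m.+2 - k.+1, k.+1) = 'C(m.+1 - k.+1, k.+1) + 'C(m - k, k))%N.
      case: (leqP k m) => hk.
      * by rewrite !subSS (subSn hk) binS.
      * have hk0 : (m - k = 0)%N by apply/eqP; rewrite subn_eq0 ltnW.
        rewrite !subSS hk0 (_ : m.+1 - k = 0)%N; last by apply/eqP; rewrite subn_eq0.
        rewrite !bin0n; clear e1 e2; case: k hk hk0 => //.
    rewrite natrD -!mul_polyC rmorphD /= !exprS; ring.
Qed.

Lemma coefF m k : (1 <= m)%N -> 'X ^+ (k + k) * (Fpq m)`_k = d k m *: 'X ^+ m.
Proof. by case: m => // m _; exact: (proj1 (coefF_all m k)). Qed.

Lemma F0 m : (1 <= m)%N -> (Fpq m)`_0 = 'X ^+ m.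
Proof. move=> h; have := coefF _ 0 h; rewrite /=; by rewrite /d bin0 scale1r mul1r. Qed.
Lemma F1 m : (1 <= m)%N -> 'X ^+ 2 * (Fpq m)`_1 = d 1 m *: 'X ^+ m.
Proof. exact: (coefF _ 1). Qed.
Lemma F2 m : (1 <= m)%N -> 'X ^+ 4 * (Fpq m)`_2 = d 2 m *: 'X ^+ m.
Proof. exact: (coefF _ 2). Qed.
Lemma F3 m : (1 <= m)%N -> 'X ^+ 6 * (Fpq m)`_3 = d 3 m *: 'X ^+ m.
Proof. exact: (coefF _ 3). Qed.

Definition P n : PQ := \prod_(1 <= i < n) Fpq i.

Lemma cfP n : (1 <= n)%N -> cf n 1 = P n.
Proof.
case: n => // n _; rewrite /cf /risingF coefXM /= coef0_prod /P.
by apply: eq_bigr => i _; rewrite coefD coefX coefC /= add0r.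
Qed.

Lemma PS n : (1 <= n)%N -> P n.+1 = P n * Fpq n.
Proof. by move=> hn; rewrite /P big_nat_recr. Qed.

Lemma Pinv n : (1 <= n)%N ->
  (P n)`_0 = 'X ^+ 'C(n, 2)
  /\ 'X ^+ 2 * (P n)`_1 = c1 n *: 'X ^+ 'C(n, 2)
  /\ 'X ^+ 4 * (P n)`_2 = c2 n *: 'X ^+ 'C(n, 2)
  /\ 'X ^+ 6 * (P n)`_3 = c3 n *: 'X ^+ 'C(n, 2).
Proof.
elim: n => // n IH hn.
case: n IH hn => [|n] IH _.
  rewrite /P big_geq // !coef1 /c1 /c2 /c3 /= !scale0r !mulr0.
  by rewrite expr0.
have hn : (1 <= n.+1)%N by [].
have [e0 [e1 [e2 e3]]] := IH hn.
have f0 := F0 _ hn; have f1 := F1 _ hn; have f2 := F2 _ hn; have f3 := F3 _ hn.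
have eB : 'C(n.+2, 2) = ('C(n.+1, 2) + n.+1)%N by rewrite binS bin1.
rewrite PS // !coefM !big_ord_recr !big_ord0 /= ?subSS ?subn0 ?subnn !add0r eB exprD.
rewrite (id1 _ hn) (id2 _ hn) (id3 _ hn).
split; first by rewrite e0 f0.
split.
  have -> : 'X ^+ 2 * ((P n.+1)`_0 * (Fpq n.+1)`_1 + (P n.+1)`_1 * (Fpq n.+1)`_0)
     = (P n.+1)`_0 * ('X^2 * (Fpq n.+1)`_1) + ('X ^+ 2 * (P n.+1)`_1) * (Fpq n.+1)`_0 by ring.
  rewrite e0 e1 f0 f1 -!mul_polyC;
  move: (c1 n.+1) (c2 n.+1) (c3 n.+1) (d 1 n.+1) (d 2 n.+1) (d 3 n.+1) => a1 a2 a3 b1 b2 b3;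
  rewrite ?rmorphD ?rmorphM; ring.
split.
  have -> : 'X ^+ 4 * ((P n.+1)`_0 * (Fpq n.+1)`_2 + (P n.+1)`_1 * (Fpq n.+1)`_1 + (P n.+1)`_2 * (Fpq n.+1)`_0)
     = (P n.+1)`_0 * ('X^4 * (Fpq n.+1)`_2) + ('X ^+ 2 * (P n.+1)`_1) * ('X^2 * (Fpq n.+1)`_1)
       + ('X ^+ 4 * (P n.+1)`_2) * (Fpq n.+1)`_0 by ring.
  rewrite e0 e1 e2 f0 f1 f2 -!mul_polyC;
  move: (c1 n.+1) (c2 n.+1) (c3 n.+1) (d 1 n.+1) (d 2 n.+1) (d 3 n.+1) => a1 a2 a3 b1 b2 b3;
  rewrite ?rmorphD ?rmorphM; ring.
have -> : 'X ^+ 6 * ((P n.+1)`_0 * (Fpq n.+1)`_3 + (P n.+1)`_1 * (Fpq n.+1)`_2 + (P n.+1)`_2 * (Fpq n.+1)`_1 + (P n.+1)`_3 * (Fpq n.+1)`_0)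
   = (P n.+1)`_0 * ('X^6 * (Fpq n.+1)`_3) + ('X ^+ 2 * (P n.+1)`_1) * ('X^4 * (Fpq n.+1)`_2)
     + ('X ^+ 4 * (P n.+1)`_2) * ('X^2 * (Fpq n.+1)`_1) + ('X ^+ 6 * (P n.+1)`_3) * (Fpq n.+1)`_0 by ring.
rewrite e0 e1 e2 e3 f0 f1 f2 f3 -!mul_polyC;
  move: (c1 n.+1) (c2 n.+1) (c3 n.+1) (d 1 n.+1) (d 2 n.+1) (d 3 n.+1) => a1 a2 a3 b1 b2 b3;
  rewrite ?rmorphD ?rmorphM; ring.
Qed.

Lemma cancelX (y : {poly rat}) c s N : 'X ^+ s * y = c *: 'X ^+ N -> (c = 0 \/ (s <= N)%N) ->
  y = c *: 'X ^+ (N - s).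
Proof.
move=> e [hc|hs].
- have : 'X ^+ s * y == 0 by rewrite e hc scale0r.
  rewrite mulf_eq0 expf_eq0 polyX_eq0 andbF /= => /eqP ->; by rewrite hc scale0r.
- apply: (@mulfI _ ('X ^+ s)); first by rewrite expf_eq0 polyX_eq0 andbF.
  by rewrite e -scalerAr -exprD subnKC.
Qed.

Arguments cancelX {y c s N}.

Lemma binbound n : (3 <= n)%N -> (n <= 'C(n, 2))%N.
Proof.
move=> h; have e : ('C(n, 2) * 2 = n * n.-1)%N.
  by rewrite (bin_ffact n 2) ffactnSr ffactn1 subn1.
case: n h e => // n h e; rewrite /= in e; nia.
Qed.

Theorem theorem14 (n : nat) (hn : (1 <= n)%N) :
  (cf n 1)`_0 = 'X ^+ 'C(n, 2)
  /\ (cf n 1)`_1 =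
       (if (n <= 3)%N then 0
        else ('C(n - 2, 2))%:R *: 'X ^+ ('C(n, 2) - 2))
  /\ (cf n 1)`_2 =
       (if (n <= 4)%N then 0
        else ((3 * 'C(n - 1, 4))%:R - ('C(n - 3, 2))%:R : rat)
               *: 'X ^+ ('C(n, 2) - 4))
  /\ (cf n 1)`_3 =
       (if (n <= 5)%N then 0
        else ((15 * 'C(n, 6))%:R - (6 * 'C(n - 2, 4))%:R + ('C(n - 4, 4))%:R : rat)
               *: 'X ^+ ('C(n, 2) - 6)).
Proof.
rewrite (cfP _ hn); have [e0 [e1 [e2 e3]]] := Pinv _ hn.
split; first exact: e0.
have B := binbound.
split; [|split].
- rewrite (cancelX e1); last first.
    case: (leqP n 3) => h; [left | right].
    + by case: n hn h {e0 e1 e2 e3} => [|[|[|[|n]]]].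
    + by apply: leq_trans (B _ (ltnW h)); apply: leq_trans h.
  case: ifP => // h; rewrite /c1.
  by case: n hn h {e0 e1 e2 e3 B} => [|[|[|[|n]]]] //; rewrite scale0r.
- rewrite (cancelX e2); last first.
    case: (leqP n 4) => h; [left | right].
    + by case: n hn h {e0 e1 e2 e3} => [|[|[|[|[|n]]]]] //; rewrite /c2 /=; apply/eqP; vm_compute.
    + by apply: leq_trans (B _ (ltnW (ltnW h))); apply: leq_trans h.
  case: ifP => // h; rewrite /c2.
  by case: n hn h {e0 e1 e2 e3 B} => [|[|[|[|[|n]]]]] //; rewrite /= subrr scale0r.
- rewrite (cancelX e3); last first.
    case: (leqP n 5) => h; [left | right].
    + by case: n hn h {e0 e1 e2 e3} => [|[|[|[|[|[|n]]]]]] //; rewrite /c3 /=; apply/eqP; vm_compute.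
    + by apply: leq_trans (B _ (ltnW (ltnW (ltnW h)))); apply: leq_trans h.
  case: ifP => // h.
  suff -> : c3 n = 0 by rewrite scale0r.
  by case: n hn h {e0 e1 e2 e3 B} => [|[|[|[|[|[|n]]]]]] // _ _; apply/eqP; vm_compute.
Qed.
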